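(* Let $A$ be a braided Hopf algebra over a field $k$ with braiding $\langle\cdot\mid\cdot\rangle$ and antipode $S$, and let $U_0=U_0(A)=U^+\cap U^-\subset A^\circ$. For $x,y\in U_0$ write $x=l^+(a)$ and $y=l^-(b)$ with $a,b\in A$, and set $$(x\mid y)=\langle a\mid S(b)\rangle .$$ Then $(\cdot\mid\cdot)$ is a well-defined bilinear form on $U_0$, and it is a braiding on the Hopf algebra $U_0$.
   Context: Throughout, for a bialgebra $A$ we use Sweedler notation $\Delta(a)=\sum a_{(1)}\otimes a_{(2)}$. A braiding on a bialgebra $A$ over a field $k$ is a bilinear form $\langle\cdot\mid\cdot\rangle:A\times A\to k$ such that for all $a,b,c\in A$: (1) $\sum\langle a_{(1)}\mid b_{(1)}\rangle\, b_{(2)}a_{(2)}=\sum\langle a_{(2)}\mid b_{(2)}\rangle\, a_{(1)}b_{(1)}$; (2) $\langle\cdot\mid\cdot\rangle$ is invertible in the convolution algebra $(A\otimes A)^*$; (3) $\langle a\mid bc\rangle=\sum\langle a_{(1)}\mid b\rangle\langle a_{(2)}\mid c\rangle$; (4) $\langle ab\mid c\rangle=\sum\langle b\mid c_{(1)}\rangle\langle a\mid c_{(2)}\rangle$. A braided bialgebra (resp. braided Hopf algebra) is a bialgebra (resp. Hopf algebra) equipped with a braiding. For a Hopf algebra $A$, $A^\circ$ denotes its restricted (finite) dual Hopf algebra. For a braided Hopf algebra $A$ define $l^{\pm}:A\to A^\circ$ by $l^+(a)(b)=\langle a\mid b\rangle$ and $l^-(a)(b)=\langle b\mid S(a)\rangle$;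 these are Hopf algebra maps $A^{op}\to A^\circ$. Let $U^\pm=l^\pm(A)$ (Hopf subalgebras of $A^\circ$), let $U(A)$ (the FRT dual) be the Hopf subalgebra of $A^\circ$ generated by $U^+$ and $U^-$, and let $U_0(A)=U^+\cap U^-$, a Hopf subalgebra of $A^\circ$. *)

(* Defs.v *)
(* Hopf algebras over a field k, with tensors represented by
   finite lists of pairs (Sweedler representatives). *)
From mathcomp Require Import all_boot all_order all_algebra.
Set Implicit Arguments. Unset Strict Implicit. Unset Printing Implicit Defensive.
Import GRing.Theory.
Local Open Scope ring_scope.

Section BraidedHopf.
Variable k : fieldType.
Variable A : algType k.

Definition linear_to_k (f : A -> k) : Prop :=
  forall (c : k) (u v : A), f (c *: u + v) = c * f u + f v.

Definition linear_endo (f : A -> A) : Prop :=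
  forall (c : k) (u v : A), f (c *: u + v) = c *: f u + f v.

Definition bilinear_form (f : A -> A -> k) : Prop :=
  (forall b, linear_to_k (fun a => f a b)) /\ (forall a, linear_to_k (f a)).

Definition trilinear_form (f : A -> A -> A -> k) : Prop :=
  [/\ (forall b c, linear_to_k (fun a => f a b c)),
      (forall a c, linear_to_k (fun b => f a b c)) &
      (forall a b, linear_to_k (f a b))].

(* Two finite lists of pairs represent the same element of A (x) A iff they are
   not separated by any bilinear form A x A -> k. *)
Definition teq2 (s t : seq (A * A)) : Prop :=
  forall f, bilinear_form f ->
    \sum_(p <- s) f p.1 p.2 = \sum_(p <- t) f p.1 p.2.

(* ---------- Hopf algebra structure on A ----------
   Delta a is a list [:: (a_(1), a_(2)); ...] representing Delta(a) in A (x) A. *)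
Definition is_hopf (Delta : A -> seq (A * A)) (eps : A -> k) (S : A -> A) : Prop :=
  (forall (c : k) (a b : A),
      teq2 (Delta (c *: a + b)) ([seq (c *: p.1, p.2) | p <- Delta a] ++ Delta b)) /\
  (forall a f, trilinear_form f ->
      \sum_(p <- Delta a) \sum_(q <- Delta p.1) f q.1 q.2 p.2
    = \sum_(p <- Delta a) \sum_(q <- Delta p.2) f p.1 q.1 q.2) /\
  linear_to_k eps /\
  (forall a, \sum_(p <- Delta a) eps p.1 *: p.2 = a) /\
  (forall a, \sum_(p <- Delta a) eps p.2 *: p.1 = a) /\
  (forall a b, teq2 (Delta (a * b))
                    [seq (p.1 * q.1, p.2 * q.2) | p <- Delta a, q <- Delta b]) /\
  teq2 (Delta 1) [:: (1, 1)] /\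
  (forall a b, eps (a * b) = eps a * eps b) /\
  eps 1 = 1 /\
  linear_endo S /\
  (forall a, \sum_(p <- Delta a) S p.1 * p.2 = (eps a)%:A) /\
  (forall a, \sum_(p <- Delta a) p.1 * S p.2 = (eps a)%:A).

Definition is_braiding (Delta : A -> seq (A * A)) (eps : A -> k)
    (br : A -> A -> k) : Prop :=
  bilinear_form br /\
  (forall a b,
      \sum_(p <- Delta a) \sum_(q <- Delta b) br p.1 q.1 *: (q.2 * p.2)
    = \sum_(p <- Delta a) \sum_(q <- Delta b) br p.2 q.2 *: (p.1 * q.1)) /\
  (exists brinv, bilinear_form brinv /\
     forall a b,
       \sum_(p <- Delta a) \sum_(q <- Delta b) br p.1 q.1 * brinv p.2 q.2 = eps a * eps b /\
       \sum_(p <- Delta a) \sum_(q <- Delta b) brinv p.1 q.1 * br p.2 q.2 = eps a * eps b) /\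
  (forall a b c, br a (b * c) = \sum_(p <- Delta a) br p.1 b * br p.2 c) /\
  (forall a b c, br (a * b) c = \sum_(p <- Delta c) br b p.1 * br a p.2).

(* ---------- the dual side: elements of A° are functionals A -> k ---------- *)
Definition lplus (br : A -> A -> k) (a : A) : A -> k := fun b => br a b.
Definition lminus (br : A -> A -> k) (S : A -> A) (a : A) : A -> k :=
  fun b => br b (S a).

Definition inU0 (br : A -> A -> k) (S : A -> A) (x : A -> k) : Prop :=
  (exists a, x =1 lplus br a) /\ (exists b, x =1 lminus br S b).

(* product of A° (convolution, dual to Delta); the unit is eps, the counit
   is evaluation at 1 *)
Definition dual_mul (Delta : A -> seq (A * A)) (x y : A -> k) : A -> k :=
  fun c => \sum_(r <- Delta c) x r.1 * y r.2.

(* dx is a representative of Delta(x) in P (x) P : a finite list of pairs of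
   elements of P with x(ab) = sum x_(1)(a) x_(2)(b) *)
Definition coprod_rep (P : (A -> k) -> Prop) (x : A -> k)
    (dx : seq ((A -> k) * (A -> k))) : Prop :=
  (forall i, (i < size dx)%N -> P (nth (x, x) dx i).1 /\ P (nth (x, x) dx i).2) /\
  (forall a b, x (a * b) = \sum_(p <- dx) p.1 a * p.2 b).

Definition bilinear_on (P : (A -> k) -> Prop) (f : (A -> k) -> (A -> k) -> k) : Prop :=
  (forall (c : k) x x' y, P x -> P x' -> P y ->
      f (fun a => c * x a + x' a) y = c * f x y + f x' y) /\
  (forall (c : k) x y y', P x -> P y -> P y' ->
      f x (fun a => c * y a + y' a) = c * f x y + f x y').

(* a braiding on the sub-Hopf algebra P of A° (coproduct, product and counit
   inherited from A°) *)
Definition is_braiding_on (Delta : A -> seq (A * A)) (P : (A -> k) -> Prop)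
    (form : (A -> k) -> (A -> k) -> k) : Prop :=
  bilinear_on P form /\
  (forall x, P x -> exists dx, coprod_rep P x dx) /\
  (forall x y dx dy, P x -> P y -> coprod_rep P x dx -> coprod_rep P y dy ->
     forall c : A,
       \sum_(p <- dx) \sum_(q <- dy) form p.1 q.1 * dual_mul Delta q.2 p.2 c
     = \sum_(p <- dx) \sum_(q <- dy) form p.2 q.2 * dual_mul Delta p.1 q.1 c) /\
  (exists inv, bilinear_on P inv /\
     forall x y dx dy, P x -> P y -> coprod_rep P x dx -> coprod_rep P y dy ->
       \sum_(p <- dx) \sum_(q <- dy) form p.1 q.1 * inv p.2 q.2 = x 1 * y 1 /\
       \sum_(p <- dx) \sum_(q <- dy) inv p.1 q.1 * form p.2 q.2 = x 1 * y 1) /\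
  (forall x y z dx, P x -> P y -> P z -> coprod_rep P x dx ->
     form x (dual_mul Delta y z) = \sum_(p <- dx) form p.1 y * form p.2 z) /\
  (forall x y z dz, P x -> P y -> P z -> coprod_rep P z dz ->
     form (dual_mul Delta x y) z = \sum_(p <- dz) form y p.1 * form x p.2).

End BraidedHopf.

(* Main.v *)
Require Import Defs.
From mathcomp Require Import all_boot all_order all_algebra.
From mathcomp Require Import ring.
Set Implicit Arguments. Unset Strict Implicit. Unset Printing Implicit Defensive.
Import GRing.Theory.
Local Open Scope ring_scope.

Section Lin.
Variable k : fieldType.
Variable A : algType k.

Lemma lk0 (f : A -> k) : linear_to_k f -> f 0 = 0.
Proof.
move=> H; have h := H 1 0 0; rewrite scale1r addr0 mul1r in h.
by apply: (@addrI _ (f 0)); rewrite addr0 -h.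
Qed.
Lemma lkD (f : A -> k) : linear_to_k f -> forall u v, f (u + v) = f u + f v.
Proof. by move=> H u v; have := H 1 u v; rewrite scale1r mul1r. Qed.
Lemma lkZ (f : A -> k) : linear_to_k f -> forall c u, f (c *: u) = c * f u.
Proof. by move=> H c u; rewrite -(addr0 (c *: u)) H lk0 // addr0. Qed.
Lemma lk_sumE (f : A -> k) I (s : seq I) (G : I -> A) : linear_to_k f ->
  f (\sum_(i <- s) G i) = \sum_(i <- s) f (G i).
Proof.
move=> H; elim: s => [|x s IH]; first by rewrite !big_nil lk0.
by rewrite !big_cons lkD // IH.
Qed.

Lemma le0 (g : A -> A) : linear_endo g -> g 0 = 0.
Proof.
move=> H; have h := H 1 0 0; rewrite !scale1r addr0 in h.
by apply: (@addrI _ (g 0)); rewrite addr0 -h.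
Qed.
Lemma leD (g : A -> A) : linear_endo g -> forall u v, g (u + v) = g u + g v.
Proof. by move=> H u v; have := H 1 u v; rewrite !scale1r. Qed.
Lemma leZ (g : A -> A) : linear_endo g -> forall c u, g (c *: u) = c *: g u.
Proof. by move=> H c u; rewrite -(addr0 (c *: u)) H le0 // addr0. Qed.
Lemma le_sumE (g : A -> A) I (s : seq I) (G : I -> A) : linear_endo g ->
  g (\sum_(i <- s) G i) = \sum_(i <- s) g (G i).
Proof.
move=> H; elim: s => [|x s IH]; first by rewrite !big_nil le0.
by rewrite !big_cons leD // IH.
Qed.

Lemma lk_sum I (s : seq I) (F : I -> A -> k) :
  (forall i, linear_to_k (F i)) -> linear_to_k (fun x => \sum_(i <- s) F i x).
Proof.
move=> H c u v; rewrite mulr_sumr -big_split /=; apply: eq_bigr => i _.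
exact: H.
Qed.
Lemma lk_mull (f : A -> k) (c0 : k) : linear_to_k f -> linear_to_k (fun x => f x * c0).
Proof. by move=> H c u v; rewrite H mulrDl mulrA. Qed.
Lemma lk_mulr (f : A -> k) (c0 : k) : linear_to_k f -> linear_to_k (fun x => c0 * f x).
Proof. by move=> H c u v; rewrite H mulrDr mulrCA. Qed.
Lemma lk_comp (f : A -> k) (g : A -> A) : linear_to_k f -> linear_endo g ->
  linear_to_k (fun x => f (g x)).
Proof. by move=> Hf Hg c u v; rewrite Hg Hf. Qed.
Lemma le_id : linear_endo (A:=A) id.
Proof. by []. Qed.
Lemma le_mull (a : A) : linear_endo (fun x => x * a).
Proof. by move=> c u v; rewrite mulrDl scalerAl. Qed.
Lemma le_mulr (a : A) : linear_endo (fun x => a * x).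
Proof. by move=> c u v; rewrite mulrDr scalerAr. Qed.
Lemma le_comp (g h : A -> A) : linear_endo g -> linear_endo h -> linear_endo (fun x => g (h x)).
Proof. by move=> Hg Hh c u v; rewrite Hh Hg. Qed.
End Lin.

From Stdlib Require Import Classical.
From Stdlib Require ClassicalEpsilon.

Section Skel.
Variable k : fieldType.
Variable T : Type.

Definition AllP (P : (T -> k) -> Prop) (d : seq ((T -> k) * (T -> k))) :=
  foldr (fun p acc => P p.1 /\ P p.2 /\ acc) True d.

Lemma AllP_nth P d x0 : AllP P d -> forall i, (i < size d)%N ->
  P (nth x0 d i).1 /\ P (nth x0 d i).2.
Proof.
elim: d => [|p d IH] //= [H1 [H2 H3]] [|i] //= Hi.
exact: IH.
Qed.

Lemma exists_split (s : seq ((T -> k) * (T -> k))) a0 b0 :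
  \sum_(p <- s) p.1 a0 * p.2 b0 != 0 ->
  exists s1 f g s2, s = s1 ++ (f, g) :: s2 /\ f a0 != 0.
Proof.
elim: s => [|[f g] s IH]; first by rewrite big_nil eqxx.
rewrite big_cons /=; case: (eqVneq (f a0) 0) => [Hf|Hf] H.
  rewrite Hf mul0r add0r in H.
  have [s1 [f' [g' [s2 [E Hf']]]]] := IH H.
  by exists ((f, g) :: s1), f', g', s2; rewrite E.
by exists [::], f, g, s.
Qed.

Lemma skel (P : (T -> k) -> Prop) (HPe : forall f g, f =1 g -> P f -> P g)
  (HPc : forall c f g, P f -> P g -> P (fun a => c * f a + g a))
  (HPs : forall c f, P f -> P (fun a => c * f a)) :
  forall n (s : seq ((T -> k) * (T -> k))) (Tf : T -> T -> k), size s = n ->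
  (forall u v, Tf u v = \sum_(p <- s) p.1 u * p.2 v) ->
  (forall v, P (fun u => Tf u v)) -> (forall u, P (fun v => Tf u v)) ->
  exists d, AllP P d /\ forall u v, Tf u v = \sum_(p <- d) p.1 u * p.2 v.
Proof.
elim=> [|n IH] s Tf Hs HT HP1 HP2.
  move: Hs => /size0nil Es; exists [::]; split => // u v; by rewrite HT Es !big_nil.
case: (classic (exists a0 b0, Tf a0 b0 != 0)) => [[a0 [b0 Ht]] | Hn]; last first.
  exists [::]; split => // u v; rewrite big_nil.
  case: (eqVneq (Tf u v) 0) => // H; exfalso; apply: Hn; by exists u, v.
set t := Tf a0 b0 in Ht.
have := Ht; rewrite /t HT => /exists_split [s1 [f [g [s2 [Es Hf]]]]].
pose w (p : (T -> k) * (T -> k)) := fun v => p.2 v - p.2 b0 * (Tf a0 v / t).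
pose s' := [seq (fun u => p.1 u - p.1 a0 / f a0 * f u, w p) | p <- s1 ++ s2].
pose Tf' u v := Tf u v - Tf u b0 * (Tf a0 v / t).
have Hs' : size s' = n.
  rewrite size_map size_cat; move: Hs; rewrite Es size_cat /= addnS; by case.
have E1 : forall u v, Tf' u v = \sum_(p <- s) p.1 u * w p v.
  move=> u v; rewrite /Tf' /w (HT u v) (HT u b0) mulr_suml -sumrB.
  apply: eq_bigr => p _; ring.
have Z : forall v, \sum_(p <- s) p.1 a0 * w p v = 0.
  move=> v; rewrite -E1 /Tf' -/t; field; exact: Ht.
have HT' : forall u v, Tf' u v = \sum_(p <- s') p.1 u * p.2 v.
  move=> u v; rewrite E1 big_map.
  have spl : forall r, \sum_(p <- r) (p.1 u - p.1 a0 / f a0 * f u) * w p v =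
      \sum_(p <- r) p.1 u * w p v - f u / f a0 * \sum_(p <- r) p.1 a0 * w p v.
    move=> r; rewrite mulr_sumr -sumrB; apply: eq_bigr => p _; ring.
  have := Z v; rewrite Es !big_cat !big_cons /= spl => Zv.
  rewrite !spl.
  set B1 := \sum_(p <- s1) p.1 a0 * w p v in Zv *.
  set B2 := \sum_(p <- s2) p.1 a0 * w p v in Zv *.
  have Ewf : w (f, g) v = - (B1 + B2) / f a0.
    have H1 : f a0 * w (f, g) v = - (B1 + B2).
      rewrite -[LHS]subr0 -Zv; ring.
    apply: (mulfI Hf); rewrite H1; field; exact: Hf.
  rewrite /= in Ewf *; rewrite Ewf; field; exact: Hf.
have HP1' : forall v, P (fun u => Tf' u v).
  move=> v; apply: (HPe (fun a => (- (Tf a0 v / t)) * Tf a b0 + Tf a v)).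
    by move=> u; rewrite /Tf'; ring.
  by apply: HPc.
have HP2' : forall u, P (fun v => Tf' u v).
  move=> u; apply: (HPe (fun a => (- (Tf u b0 / t)) * Tf a0 a + Tf u a)).
    by move=> v; rewrite /Tf'; ring.
  by apply: HPc.
have [d' [Hd' HTd']] := IH s' Tf' Hs' HT' HP1' HP2'.
exists ((fun u => t^-1 * Tf u b0, fun v => Tf a0 v) :: d'); split.
  rewrite /=; split; first exact: (HPs _ _ (HP1 b0)).
  split; first exact: HP2 a0.
  exact: Hd'.
move=> u v; rewrite big_cons /= -HTd' /Tf'; field; exact: Ht.
Qed.
End Skel.

Unset Implicit Arguments.
Section Hopf.
Variable k : fieldType.
Variable A : algType k.
Variables (Delta : A -> seq (A * A)) (eps : A -> k) (S : A -> A) (br brinv : A -> A -> k).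
Hypothesis HDlin : forall (c : k) (a b : A),
  teq2 (Delta (c *: a + b)) ([seq (c *: p.1, p.2) | p <- Delta a] ++ Delta b).
Hypothesis Hcoas : forall a f, trilinear_form f ->
      \sum_(p <- Delta a) \sum_(q <- Delta p.1) f q.1 q.2 p.2
    = \sum_(p <- Delta a) \sum_(q <- Delta p.2) f p.1 q.1 q.2.
Hypothesis Heps : linear_to_k eps.
Hypothesis Hcl : forall a, \sum_(p <- Delta a) eps p.1 *: p.2 = a.
Hypothesis Hcr : forall a, \sum_(p <- Delta a) eps p.2 *: p.1 = a.
Hypothesis HDmul : forall a b, teq2 (Delta (a * b))
                    [seq (p.1 * q.1, p.2 * q.2) | p <- Delta a, q <- Delta b].
Hypothesis HD1 : teq2 (Delta 1) [:: (1, 1)].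
Hypothesis Hepsmul : forall a b, eps (a * b) = eps a * eps b.
Hypothesis Heps1 : eps 1 = 1.
Hypothesis HS : linear_endo S.
Hypothesis HantL : forall a, \sum_(p <- Delta a) S p.1 * p.2 = (eps a)%:A.
Hypothesis HantR : forall a, \sum_(p <- Delta a) p.1 * S p.2 = (eps a)%:A.
Hypothesis Hbr : bilinear_form br.
Hypothesis Hbr1 : forall a b,
      \sum_(p <- Delta a) \sum_(q <- Delta b) br p.1 q.1 *: (q.2 * p.2)
    = \sum_(p <- Delta a) \sum_(q <- Delta b) br p.2 q.2 *: (p.1 * q.1).
Hypothesis Hinv : bilinear_form brinv.
Hypothesis Hinv2 : forall a b,
       \sum_(p <- Delta a) \sum_(q <- Delta b) br p.1 q.1 * brinv p.2 q.2 = eps a * eps b /\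
       \sum_(p <- Delta a) \sum_(q <- Delta b) brinv p.1 q.1 * br p.2 q.2 = eps a * eps b.
Hypothesis Hbr3 : forall a b c, br a (b * c) = \sum_(p <- Delta a) br p.1 b * br p.2 c.
Hypothesis Hbr4 : forall a b c, br (a * b) c = \sum_(p <- Delta c) br b p.1 * br a p.2.

Lemma brL b (g : A -> A) : linear_endo g -> linear_to_k (fun x => br (g x) b).
Proof. move=> Hg; exact: (lk_comp (Hbr.1 b) Hg). Qed.
Lemma brR a (g : A -> A) : linear_endo g -> linear_to_k (fun x => br a (g x)).
Proof. move=> Hg; exact: (lk_comp (Hbr.2 a) Hg). Qed.
Lemma invL b (g : A -> A) : linear_endo g -> linear_to_k (fun x => brinv (g x) b).
Proof. move=> Hg; exact: (lk_comp (Hinv.1 b) Hg). Qed.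
Lemma invR a (g : A -> A) : linear_endo g -> linear_to_k (fun x => brinv a (g x)).
Proof. move=> Hg; exact: (lk_comp (Hinv.2 a) Hg). Qed.
Lemma epsL (g : A -> A) : linear_endo g -> linear_to_k (fun x => eps (g x)).
Proof. move=> Hg; exact: (lk_comp Heps Hg). Qed.

Lemma lk_dsum (G : A * A -> k) :
  (forall b, linear_to_k (fun a => G (a, b))) -> (forall a, linear_to_k (fun b => G (a, b))) ->
  linear_to_k (fun x => \sum_(p <- Delta x) G p).
Proof.
move=> H1 H2 c u v.
have E := HDlin c u v (fun a b => G (a, b)) (conj H1 H2).
have et : forall s, \sum_(p <- s) G p = \sum_(p <- s) G (p.1, p.2) by move=> s; apply: eq_bigr => -[].
rewrite !et /= E.
rewrite big_cat big_map /= mulr_sumr; congr (_ + _); apply: eq_bigr => p _.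
by rewrite (lkZ (H1 p.2)) -surjective_pairing.
Qed.
Lemma lk_dsum_comp (G : A * A -> k) (g : A -> A) :
  (forall b, linear_to_k (fun a => G (a, b))) -> (forall a, linear_to_k (fun b => G (a, b))) ->
  linear_endo g ->
  linear_to_k (fun x => \sum_(p <- Delta (g x)) G p).
Proof. by move=> H1 H2 Hg; apply: (lk_comp (lk_dsum G H1 H2) Hg). Qed.

Ltac lend := first [ exact: le_id | exact: HS | exact: le_mull | exact: le_mulr
                   | apply: le_comp; lend ].
Ltac lin := rewrite /=; repeat first
  [ assumption
  | match goal with H : forall _ : _, linear_to_k _ |- _ => exact: H end
  | match goal with H : forall (_ : _) (_ : _), linear_to_k _ |- _ => exact: H end
  | match goal with H : forall (_ : _) (_ : _) (_ : _), linear_to_k _ |- _ => exact: H end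
  | apply: lk_sum => ?; rewrite /=
  | apply: lk_dsum => ?; rewrite /=
  | apply: lk_mull
  | apply: lk_mulr
  | eapply brL; lend | eapply brR; lend | eapply invL; lend | eapply invR; lend
  | eapply epsL; lend
  | apply: lk_dsum_comp; [ move=> ?; rewrite /= | move=> ?; rewrite /= | lend ] ].

Lemma test1 b : linear_to_k (fun x => \sum_(p <- Delta b) \sum_(q <- Delta (S x)) br (S q.1) p.1 * br p.2 (q.2 * b)).
Proof. lin. Qed.


Ltac bil := split => ?; lin.
Ltac tril := split => ? ?; lin.

Lemma cl_f (f : A -> k) : linear_to_k f -> forall a, \sum_(p <- Delta a) eps p.1 * f p.2 = f a.
Proof.
move=> Hf a; rewrite -[in RHS](Hcl a) lk_sumE //; apply: eq_bigr => p _; by rewrite lkZ.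
Qed.
Lemma cr_f (f : A -> k) : linear_to_k f -> forall a, \sum_(p <- Delta a) eps p.2 * f p.1 = f a.
Proof.
move=> Hf a; rewrite -[in RHS](Hcr a) lk_sumE //; apply: eq_bigr => p _; by rewrite lkZ.
Qed.
Lemma eps_A c : eps (c%:A) = c.
Proof. by rewrite lkZ // Heps1 mulr1. Qed.
Lemma epsS a : eps (S a) = eps a.
Proof.
have h := congr1 eps (HantL a); rewrite eps_A lk_sumE // in h.
rewrite -h -(cr_f _ (epsL S HS) a); apply: eq_bigr => p _; by rewrite Hepsmul mulrC.
Qed.

Lemma idem_eps (phi psi : A -> k) : linear_to_k phi -> linear_to_k psi ->
  (forall a, phi a = \sum_(p <- Delta a) phi p.1 * phi p.2) ->
  (forall a, \sum_(p <- Delta a) phi p.1 * psi p.2 = eps a) -> forall a, phi a = eps a.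
Proof.
move=> Hphi Hpsi Hm Hi a.
rewrite -(cr_f _ Hphi a) -[RHS]Hi.
have Ht : trilinear_form (fun x y z => phi x * (phi y * psi z)) by tril.
have E := Hcoas a _ Ht; rewrite /= in E.
transitivity (\sum_(p <- Delta a) \sum_(q <- Delta p.2) phi p.1 * (phi q.1 * psi q.2)).
  apply: eq_bigr => p _; by rewrite -Hi mulrC mulr_sumr.
rewrite -E; apply: eq_bigr => p _.
rewrite [in RHS]Hm mulr_suml; apply: eq_bigr => q _; by rewrite mulrA.
Qed.

Lemma br_1r a : br a 1 = eps a.
Proof.
apply: (@idem_eps (fun x => br x 1) (fun x => brinv x 1)); try by lin.
  by move=> x; rewrite -Hbr3 mulr1.
move=> x; have h := (Hinv2 x 1).1; rewrite Heps1 mulr1 in h; rewrite -h exchange_big /=.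
have Hb : bilinear_form (fun u v => \sum_(p <- Delta x) br p.1 u * brinv p.2 v) by bil.
by rewrite (HD1 _ Hb) big_seq1.
Qed.

Lemma br_1l b : br 1 b = eps b.
Proof.
apply: (@idem_eps (fun x => br 1 x) (fun x => brinv 1 x)); try by lin.
  by move=> x; rewrite -Hbr4 mulr1.
move=> x; have h := (Hinv2 1 x).1; rewrite Heps1 mul1r in h; rewrite -h.
have Hb : bilinear_form (fun u v => \sum_(q <- Delta x) br u q.1 * brinv v q.2) by bil.
by rewrite (HD1 _ Hb) big_seq1.
Qed.

Definition conv2 (F G : A -> A -> k) a b :=
  \sum_(p <- Delta a) \sum_(q <- Delta b) F p.1 q.1 * G p.2 q.2.
Definition E2 (a b : A) := eps a * eps b.

Lemma conv2_unitr F : bilinear_form F -> forall a b, conv2 F E2 a b = F a b.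
Proof.
move=> HF a b; rewrite /conv2 -(cr_f _ (HF.1 b) a); apply: eq_bigr => p _.
rewrite -(cr_f _ (HF.2 p.1) b) mulr_sumr; apply: eq_bigr => q _; rewrite /E2; ring.
Qed.
Lemma conv2_unitl F : bilinear_form F -> forall a b, conv2 E2 F a b = F a b.
Proof.
move=> HF a b; rewrite /conv2 -(cl_f _ (HF.1 b) a); apply: eq_bigr => p _.
rewrite -(cl_f _ (HF.2 p.2) b) mulr_sumr; apply: eq_bigr => q _; rewrite /E2; ring.
Qed.
Lemma conv2_bil F G : bilinear_form F -> bilinear_form G -> bilinear_form (conv2 F G).
Proof.
move=> [F1 F2] [G1 G2]; rewrite /conv2; split => ?.
  lin.
lin.
Qed.

Lemma conv2A F G H : bilinear_form F -> bilinear_form G -> bilinear_form H ->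
  forall a b, conv2 (conv2 F G) H a b = conv2 F (conv2 G H) a b.
Proof.
move=> [F1 F2] [G1 G2] [H1 H2] a b; rewrite /conv2.
transitivity (\sum_(p <- Delta a) \sum_(p' <- Delta p.2) \sum_(q <- Delta b)
   \sum_(q' <- Delta q.2) F p.1 q.1 * G p'.1 q'.1 * H p'.2 q'.2); last first.
  apply: eq_bigr => p _.
  rewrite [RHS](eq_bigr (fun q => \sum_(p0 <- Delta p.2) \sum_(q0 <- Delta q.2)
      F p.1 q.1 * (G p0.1 q0.1 * H p0.2 q0.2))); last first.
    move=> q _; rewrite mulr_sumr; apply: eq_bigr => ? _; by rewrite mulr_sumr.
  rewrite [RHS]exchange_big /=; apply: eq_bigr => p' _; apply: eq_bigr => q _.
  apply: eq_bigr => q' _; by rewrite mulrA.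
transitivity (\sum_(p <- Delta a) \sum_(p' <- Delta p.1) \sum_(q <- Delta b)
   \sum_(q' <- Delta q.1) F p'.1 q'.1 * G p'.2 q'.2 * H p.2 q.2).
  apply: eq_bigr => p _.
  transitivity (\sum_(q <- Delta b) \sum_(p' <- Delta p.1)
   \sum_(q' <- Delta q.1) F p'.1 q'.1 * G p'.2 q'.2 * H p.2 q.2).
    apply: eq_bigr => q _; rewrite mulr_suml; apply: eq_bigr => p' _; by rewrite mulr_suml.
  by rewrite exchange_big.
have Ht : trilinear_form (fun x y z => \sum_(q <- Delta b) \sum_(q' <- Delta q.1)
    F x q'.1 * G y q'.2 * H z q.2).
  tril.
rewrite (Hcoas a _ Ht) /=; apply: eq_bigr => p _; apply: eq_bigr => p' _.
have Ht2 : trilinear_form (fun x y z => F p.1 x * G p'.1 y * H p'.2 z).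
  tril.
exact: (Hcoas b _ Ht2).
Qed.

Lemma push2 (I J K : Type) (s : seq I) (t : seq J) (u : seq K) (F : I -> J -> K -> k) :
  \sum_(i <- s) \sum_(j <- t) \sum_(l <- u) F i j l =
  \sum_(l <- u) \sum_(i <- s) \sum_(j <- t) F i j l.
Proof.
rewrite (eq_bigr (fun i => \sum_(l <- u) \sum_(j <- t) F i j l)); last by move=> i _; rewrite exchange_big.
by rewrite exchange_big.
Qed.

Definition hh a b := br a (S b).
Lemma conv2_br_h a b : conv2 br hh a b = E2 a b.
Proof.
rewrite /conv2 /hh exchange_big /=.
rewrite (eq_bigr (fun q => br a (q.1 * S q.2))); last by move=> q _; rewrite Hbr3.
rewrite -lk_sumE; last by lin.
by rewrite HantR lkZ; [rewrite br_1r /E2 mulrC | exact: Hbr.2].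
Qed.
Lemma conv2_h_br a b : conv2 hh br a b = E2 a b.
Proof.
rewrite /conv2 /hh exchange_big /=.
rewrite (eq_bigr (fun q => br a (S q.1 * q.2))); last by move=> q _; rewrite Hbr3.
rewrite -lk_sumE; last by lin.
by rewrite HantL lkZ; [rewrite br_1r /E2 mulrC | exact: Hbr.2].
Qed.
Lemma hh_bil : bilinear_form hh.
Proof. rewrite /hh; bil. Qed.

Definition conv3 (F G : A -> A -> A -> k) u v c :=
  \sum_(p <- Delta u) \sum_(q <- Delta v) \sum_(r <- Delta c) F p.1 q.1 r.1 * G p.2 q.2 r.2.
Definition E3 (u v c : A) := eps u * eps v * eps c.

Lemma conv3_unitr F : trilinear_form F -> forall u v c, conv3 F E3 u v c = F u v c.
Proof.
move=> [F1 F2 F3] u v c; rewrite /conv3 -(cr_f _ (F1 v c) u); apply: eq_bigr => p _.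
rewrite -(cr_f _ (F2 p.1 c) v) mulr_sumr; apply: eq_bigr => q _.
rewrite -(cr_f _ (F3 p.1 q.1) c) !mulr_sumr; apply: eq_bigr => r _; rewrite /E3; ring.
Qed.
Lemma conv3_unitl F : trilinear_form F -> forall u v c, conv3 E3 F u v c = F u v c.
Proof.
move=> [F1 F2 F3] u v c; rewrite /conv3 -(cl_f _ (F1 v c) u); apply: eq_bigr => p _.
rewrite -(cl_f _ (F2 p.2 c) v) mulr_sumr; apply: eq_bigr => q _.
rewrite -(cl_f _ (F3 p.2 q.2) c) !mulr_sumr; apply: eq_bigr => r _; rewrite /E3; ring.
Qed.
Lemma conv3_tri F G : trilinear_form F -> trilinear_form G -> trilinear_form (conv3 F G).
Proof. move=> [F1 F2 F3] [G1 G2 G3]; rewrite /conv3; tril. Qed.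

Lemma conv3A F G H : trilinear_form F -> trilinear_form G -> trilinear_form H ->
  forall u v c, conv3 (conv3 F G) H u v c = conv3 F (conv3 G H) u v c.
Proof.
move=> [F1 F2 F3] [G1 G2 G3] [H1 H2 H3] u v c; rewrite /conv3.
transitivity (\sum_(p <- Delta u) \sum_(p' <- Delta p.2) \sum_(q <- Delta v)
   \sum_(q' <- Delta q.2) \sum_(r <- Delta c) \sum_(r' <- Delta r.2)
   F p.1 q.1 r.1 * G p'.1 q'.1 r'.1 * H p'.2 q'.2 r'.2); last first.
  apply: eq_bigr => p _.
  transitivity (\sum_(q <- Delta v) \sum_(r <- Delta c) \sum_(p' <- Delta p.2)
   \sum_(q' <- Delta q.2) \sum_(r' <- Delta r.2)
   F p.1 q.1 r.1 * G p'.1 q'.1 r'.1 * H p'.2 q'.2 r'.2); last first.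
    apply: eq_bigr => q _; apply: eq_bigr => r _; rewrite !mulr_sumr.
    apply: eq_bigr => p' _; rewrite !mulr_sumr; apply: eq_bigr => q' _; rewrite !mulr_sumr.
    apply: eq_bigr => r' _; by rewrite mulrA.
  rewrite push2; apply: eq_bigr => p' _; apply: eq_bigr => q _; by rewrite exchange_big.
transitivity (\sum_(p <- Delta u) \sum_(p' <- Delta p.1) \sum_(q <- Delta v)
   \sum_(q' <- Delta q.1) \sum_(r <- Delta c) \sum_(r' <- Delta r.1)
   F p'.1 q'.1 r'.1 * G p'.2 q'.2 r'.2 * H p.2 q.2 r.2).
  apply: eq_bigr => p _.
  transitivity (\sum_(q <- Delta v) \sum_(r <- Delta c) \sum_(p' <- Delta p.1)
   \sum_(q' <- Delta q.1) \sum_(r' <- Delta r.1)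
   F p'.1 q'.1 r'.1 * G p'.2 q'.2 r'.2 * H p.2 q.2 r.2).
    apply: eq_bigr => q _; apply: eq_bigr => r _; rewrite !mulr_suml.
    apply: eq_bigr => p' _; rewrite !mulr_suml; apply: eq_bigr => q' _; by rewrite !mulr_suml.
  rewrite push2; apply: eq_bigr => p' _; apply: eq_bigr => q _; by rewrite exchange_big.
have Ht : trilinear_form (fun x y z => \sum_(q <- Delta v) \sum_(q' <- Delta q.1)
    \sum_(r <- Delta c) \sum_(r' <- Delta r.1)
    F x q'.1 r'.1 * G y q'.2 r'.2 * H z q.2 r.2) by tril.
rewrite (Hcoas u _ Ht) /=; apply: eq_bigr => p _; apply: eq_bigr => p' _.
have Ht2 : trilinear_form (fun x y z => \sum_(r <- Delta c) \sum_(r' <- Delta r.1)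
    F p.1 x r'.1 * G p'.1 y r'.2 * H p'.2 z r.2) by tril.
rewrite (Hcoas v _ Ht2) /=; apply: eq_bigr => q _; apply: eq_bigr => q' _.
have Ht3 : trilinear_form (fun x y z => F p.1 q.1 x * G p'.1 q'.1 y * H p'.2 q'.2 z) by tril.
exact: (Hcoas c _ Ht3).
Qed.

Lemma conv3_eqr F G G' : (forall u v c, G u v c = G' u v c) ->
  forall u v c, conv3 F G u v c = conv3 F G' u v c.
Proof.
move=> HG u v c; rewrite /conv3; apply: eq_bigr => p _; apply: eq_bigr => q _.
apply: eq_bigr => r _; by rewrite HG.
Qed.
Lemma conv3_eql F F' G : (forall u v c, F u v c = F' u v c) ->
  forall u v c, conv3 F G u v c = conv3 F' G u v c.
Proof.
move=> HF u v c; rewrite /conv3; apply: eq_bigr => p _; apply: eq_bigr => q _.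
apply: eq_bigr => r _; by rewrite HF.
Qed.

Lemma coas4 c (f : A -> A -> A -> A -> k) :
  (forall b c d, linear_to_k (fun x => f x b c d)) ->
  (forall a c d, linear_to_k (fun x => f a x c d)) ->
  (forall a b d, linear_to_k (fun x => f a b x d)) ->
  (forall a b c, linear_to_k (fun x => f a b c x)) ->
  \sum_(r <- Delta c) \sum_(t <- Delta r.1) \sum_(s <- Delta r.2) f t.1 t.2 s.1 s.2 =
  \sum_(r <- Delta c) \sum_(s <- Delta r.2) \sum_(t <- Delta s.1) f r.1 t.1 t.2 s.2.
Proof.
move=> f1 f2 f3 f4.
have Ht : trilinear_form (fun x y z => \sum_(s <- Delta z) f x y s.1 s.2).
  split => ? ?; lin.
rewrite (Hcoas c _ Ht) /=; apply: eq_bigr => r _.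
have Ht2 : trilinear_form (fun x y z => f r.1 x y z) by tril.
by rewrite -(Hcoas r.2 _ Ht2).
Qed.

Definition PP u v c := br (u * v) (S c).
Definition RR u v c := br (u * v) c.
Definition QQ u v c := \sum_(r <- Delta c) br u (S r.1) * br v (S r.2).

Lemma PP_tri : trilinear_form PP. Proof. rewrite /PP; tril. Qed.
Lemma RR_tri : trilinear_form RR. Proof. rewrite /RR; tril. Qed.
Lemma QQ_tri : trilinear_form QQ. Proof. rewrite /QQ; tril. Qed.

Lemma PR_eps u v c : conv3 PP RR u v c = E3 u v c.
Proof.
have Hb : bilinear_form (fun x y => \sum_(r <- Delta c) br x (S r.1) * br y r.2) by bil.
have E := HDmul u v _ Hb; rewrite /= big_allpairs_dep /= in E.
rewrite /conv3 /PP /RR -E.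
have := conv2_h_br (u * v) c; rewrite /conv2 /hh /E2 /E3 Hepsmul => <-; by [].
Qed.

Lemma RQ_eps u v c : conv3 RR QQ u v c = E3 u v c.
Proof.
rewrite /conv3 /RR /QQ.
transitivity (\sum_(p <- Delta u) \sum_(q <- Delta v) \sum_(r <- Delta c)
  \sum_(s <- Delta r.2) \sum_(t <- Delta s.1)
  br q.1 r.1 * br p.1 t.1 * (br p.2 (S t.2) * br q.2 (S s.2))).
  apply: eq_bigr => p _; apply: eq_bigr => q _.
  rewrite -(coas4 c (fun w1 w2 w3 w4 => br q.1 w1 * br p.1 w2 * (br p.2 (S w3) * br q.2 (S w4)))); try by move=> *; lin.
  apply: eq_bigr => r _; rewrite Hbr4 mulr_suml; apply: eq_bigr => t _.
  by rewrite mulr_sumr.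
transitivity (\sum_(q <- Delta v) \sum_(r <- Delta c)
  \sum_(s <- Delta r.2) (br q.1 r.1 * br q.2 (S s.2)) * (eps u * eps s.1)).
  rewrite exchange_big /=; apply: eq_bigr => q _.
  rewrite exchange_big /=; apply: eq_bigr => r _.
  rewrite exchange_big /=; apply: eq_bigr => s _.
  rewrite -[eps u * eps s.1](conv2_br_h u s.1) /conv2 /hh mulr_sumr.
  apply: eq_bigr => p _; rewrite mulr_sumr; apply: eq_bigr => t _; ring.
transitivity (\sum_(q <- Delta v) \sum_(r <- Delta c) eps u * (br q.1 r.1 * br q.2 (S r.2))).
  apply: eq_bigr => q _; apply: eq_bigr => r _.
  rewrite -(cl_f (fun x => br q.2 (S x))); last by lin.
  rewrite mulr_sumr mulr_sumr; apply: eq_bigr => s _; ring.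
under eq_bigr do rewrite -mulr_sumr.
rewrite -mulr_sumr.
have := conv2_br_h v c; rewrite /conv2 /hh /E2 /E3 => ->; ring.
Qed.

Lemma hh_mul u v c : hh (u * v) c = \sum_(r <- Delta c) hh u r.1 * hh v r.2.
Proof.
have -> : hh (u * v) c = PP u v c by [].
have -> : \sum_(r <- Delta c) hh u r.1 * hh v r.2 = QQ u v c by [].
rewrite -(conv3_unitr PP PP_tri) (conv3_eqr _ _ _ (fun u v c => esym (RQ_eps u v c))).
rewrite -(conv3A PP RR QQ PP_tri RR_tri QQ_tri) (conv3_eql _ _ _ PR_eps).
exact: conv3_unitl QQ QQ_tri u v c.
Qed.

Lemma conv2_eqr F G G' : (forall u v, G u v = G' u v) ->
  forall u v, conv2 F G u v = conv2 F G' u v.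
Proof. move=> HG u v; rewrite /conv2; apply: eq_bigr => p _; apply: eq_bigr => q _; by rewrite HG. Qed.
Lemma conv2_eql F F' G : (forall u v, F u v = F' u v) ->
  forall u v, conv2 F G u v = conv2 F' G u v.
Proof. move=> HF u v; rewrite /conv2; apply: eq_bigr => p _; apply: eq_bigr => q _; by rewrite HF. Qed.

Definition KK a b := br (S a) (S b).
Lemma KK_bil : bilinear_form KK. Proof. rewrite /KK; bil. Qed.
Lemma conv2_K_h a b : conv2 KK hh a b = E2 a b.
Proof.
rewrite /conv2 /KK.
transitivity (\sum_(p <- Delta a) hh (S p.1 * p.2) b).
  apply: eq_bigr => p _; by rewrite hh_mul.
rewrite -(lk_sumE (f:=fun x => hh x b)); last by rewrite /hh; lin.
rewrite HantL (lkZ (f:=fun x => hh x b)); last by rewrite /hh; lin.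
by rewrite /hh br_1l epsS.
Qed.

Lemma brSS a b : br (S a) (S b) = br a b.
Proof.
have -> : br (S a) (S b) = KK a b by [].
rewrite -(conv2_unitr KK KK_bil) (conv2_eqr _ _ _ (fun u v => esym (conv2_h_br u v))).
rewrite -(conv2A KK hh br KK_bil hh_bil Hbr) (conv2_eql _ _ _ conv2_K_h).
exact: conv2_unitl br Hbr a b.
Qed.

Definition UP (x : A -> k) := exists a, x =1 lplus br a.
Definition UM (x : A -> k) := exists b, x =1 lminus br S b.
Definition pickA (x : A -> k) := ClassicalEpsilon.epsilon (inhabits (0 : A)) (fun a => x =1 lplus br a).
Definition pickB (x : A -> k) := ClassicalEpsilon.epsilon (inhabits (0 : A)) (fun b => x =1 lminus br S b).
Lemma pickA_spec x : UP x -> x =1 lplus br (pickA x).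
Proof. exact: ClassicalEpsilon.epsilon_spec. Qed.
Lemma pickB_spec x : UM x -> x =1 lminus br S (pickB x).
Proof. exact: ClassicalEpsilon.epsilon_spec. Qed.
Definition form (x y : A -> k) := y (pickA x).
Definition inv (x y : A -> k) := x (pickB y).

Lemma formE x y a b : x =1 lplus br a -> y =1 lminus br S b -> form x y = br a (S b).
Proof.
move=> Hx Hy; rewrite /form Hy /lminus.
have h1 := pickA_spec x (ex_intro _ a Hx) (S b); have h2 := Hx (S b).
rewrite /lplus in h1 h2; by rewrite -h1 h2.
Qed.
Lemma formL x y b : UP x -> y =1 lminus br S b -> form x y = x (S b).
Proof. move=> [a Hx] Hy; by rewrite (formE _ _ _ _ Hx Hy) Hx. Qed.
Lemma formR x y a : x =1 lplus br a -> UM y -> form x y = y a.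
Proof. move=> Hx [b Hy]; by rewrite (formE _ _ _ _ Hx Hy) Hy. Qed.
Lemma invE x y a b : x =1 lplus br a -> y =1 lminus br S b -> inv x y = br a b.
Proof.
move=> Hx Hy; rewrite /inv Hx /lplus.
have h1 := pickB_spec y (ex_intro _ b Hy) (S a); have h2 := Hy (S a).
rewrite /lminus in h1 h2; by rewrite -brSS -h1 h2 brSS.
Qed.

Lemma UP_lin x : UP x -> linear_to_k x.
Proof. move=> [a Hx] c u v; rewrite !Hx /lplus; exact: Hbr.2. Qed.
Lemma UM_lin x : UM x -> linear_to_k x.
Proof. move=> [b Hx] c u v; rewrite !Hx /lminus; exact: Hbr.1. Qed.

Lemma dual_mul_plus x y a a' : x =1 lplus br a -> y =1 lplus br a' ->
  dual_mul Delta x y =1 lplus br (a' * a).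
Proof.
move=> Hx Hy c; rewrite /dual_mul /lplus Hbr4; apply: eq_bigr => r _; by rewrite Hx Hy.
Qed.

Definition U0 := inU0 br S.

Lemma U0e f g : f =1 g -> U0 f -> U0 g.
Proof.
move=> E [[a Ha] [b Hb]]; split; [exists a | exists b] => z; by rewrite -E.
Qed.
Lemma U0c c f g : U0 f -> U0 g -> U0 (fun a => c * f a + g a).
Proof.
move=> [[a Ha] [b Hb]] [[a' Ha'] [b' Hb']]; split.
  exists (c *: a + a') => z; by rewrite Ha Ha' /lplus (Hbr.1 z).
exists (c *: b + b') => z; by rewrite Hb Hb' /lminus HS (Hbr.2 z).
Qed.
Lemma U0s c f : U0 f -> U0 (fun a => c * f a).
Proof.
move=> [[a Ha] [b Hb]]; split.
  exists (c *: a) => z; by rewrite Ha /lplus (lkZ (Hbr.1 z)).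
exists (c *: b) => z; by rewrite Hb /lminus (leZ HS) (lkZ (Hbr.2 z)).
Qed.

Lemma big_nthP (T : Type) (Q : T -> Prop) (s : seq T) x0 (F G : T -> k) :
  (forall i, (i < size s)%N -> Q (nth x0 s i)) -> (forall p, Q p -> F p = G p) ->
  \sum_(p <- s) F p = \sum_(p <- s) G p.
Proof.
move=> HQ HFG; elim: s HQ => [|p s IH] HQ; first by rewrite !big_nil.
rewrite !big_cons (HFG p (HQ 0%N isT)) IH // => i Hi; exact: (HQ i.+1).
Qed.

Lemma closure x : U0 x -> exists dx, coprod_rep U0 x dx.
Proof.
move=> [[a Ha] [c Hc]].
pose s := [seq (lplus br p.1, lplus br p.2) | p <- Delta a].
have HT : forall u v, x (u * v) = \sum_(p <- s) p.1 u * p.2 v.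
  by move=> u v; rewrite Ha /lplus Hbr3 big_map.
have HP1 : forall v, U0 (fun u => x (u * v)).
  move=> v; split.
    exists (\sum_(p <- Delta a) br p.2 v *: p.1) => u.
    rewrite Ha /lplus Hbr3 (lk_sumE _ _ (Hbr.1 u)); apply: eq_bigr => p _.
    by rewrite (lkZ (Hbr.1 u)) mulrC.
  exists (\sum_(r <- Delta c) br v (S r.2) *: r.1) => u.
  rewrite Hc /lminus.
  have -> : br (u * v) (S c) = hh (u * v) c by [].
  rewrite hh_mul (le_sumE _ _ HS) (lk_sumE _ _ (Hbr.2 u)); apply: eq_bigr => r _.
  by rewrite (leZ HS) (lkZ (Hbr.2 u)) mulrC.
have HP2 : forall u, U0 (fun v => x (u * v)).
  move=> u; split.
    exists (\sum_(p <- Delta a) br p.1 u *: p.2) => v.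
    rewrite Ha /lplus Hbr3 (lk_sumE _ _ (Hbr.1 v)); apply: eq_bigr => p _.
    by rewrite (lkZ (Hbr.1 v)).
  exists (\sum_(r <- Delta c) br u (S r.1) *: r.2) => v.
  rewrite Hc /lminus.
  have -> : br (u * v) (S c) = hh (u * v) c by [].
  rewrite hh_mul (le_sumE _ _ HS) (lk_sumE _ _ (Hbr.2 v)); apply: eq_bigr => r _.
  by rewrite (leZ HS) (lkZ (Hbr.2 v)).
have [d [Hd HTd]] := skel U0e U0c U0s (erefl (size s)) HT HP1 HP2.
exists d; split; last by move=> u v; rewrite HTd.
move=> i Hi; exact: AllP_nth.
Qed.

Lemma U0_UP x : U0 x -> UP x. Proof. by case. Qed.
Lemma U0_UM x : U0 x -> UM x. Proof. by case. Qed.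

Definition Q0 (p : (A -> k) * (A -> k)) := U0 p.1 /\ U0 p.2.
Lemma crepQ x dx : coprod_rep U0 x dx -> forall i, (i < size dx)%N -> Q0 (nth (x, x) dx i).
Proof. by move=> [H _] i Hi; have := H i Hi. Qed.

Arguments big_nthP {T Q s x0 F G}.
Arguments U0_UP {x}.
Arguments U0_UM {x}.
Arguments UP_lin {x}.
Arguments UM_lin {x}.
Arguments crepQ {x dx}.

Lemma prop3 x y z dx : U0 x -> U0 y -> U0 z -> coprod_rep U0 x dx ->
  form x (dual_mul Delta y z) = \sum_(p <- dx) form p.1 y * form p.2 z.
Proof.
move=> Hx [_ [by' Hy]] [_ [bz Hz]] Hdx.
rewrite (big_nthP (G := fun p => p.1 (S by') * p.2 (S bz)) (crepQ Hdx)); last first.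
  by move=> p [[Hp1 _] [Hp2 _]]; rewrite (formL _ _ _ Hp1 Hy) (formL _ _ _ Hp2 Hz).
rewrite -Hdx.2 (pickA_spec x (U0_UP Hx)) /lplus Hbr3 /form /dual_mul.
by apply: eq_bigr => p _; rewrite Hy Hz.
Qed.

Lemma prop4 x y z dz : U0 x -> U0 y -> U0 z -> coprod_rep U0 z dz ->
  form (dual_mul Delta x y) z = \sum_(p <- dz) form y p.1 * form x p.2.
Proof.
move=> [[ax Hx] _] [[ay Hy] _] [_ [bz Hz]] Hdz.
rewrite (big_nthP (G := fun p => p.1 ay * p.2 ax) (crepQ Hdz)); last first.
  by move=> p [[_ Hp1] [_ Hp2]]; rewrite (formR _ _ _ Hy Hp1) (formR _ _ _ Hx Hp2).
rewrite -Hdz.2 (formE _ _ _ _ (dual_mul_plus _ _ _ _ Hx Hy) Hz) Hz.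
by [].
Qed.

Lemma prop2a x y dx dy : U0 x -> U0 y -> coprod_rep U0 x dx -> coprod_rep U0 y dy ->
  \sum_(p <- dx) \sum_(q <- dy) form p.1 q.1 * inv p.2 q.2 = x 1 * y 1.
Proof.
move=> [[a Ha] _] Hy Hdx Hdy.
rewrite exchange_big /=.
transitivity (\sum_(q <- dy) x (S (pickB q.1) * pickB q.2)).
  apply: (big_nthP (crepQ Hdy)) => q [[_ Hq1] _].
  rewrite Hdx.2; apply: (big_nthP (crepQ Hdx)) => p [[Hp1 _] _].
  by rewrite (formL _ _ _ Hp1 (pickB_spec _ Hq1)).
transitivity (\sum_(p <- Delta a) \sum_(q <- dy) q.1 p.1 * q.2 (S p.2)).
  rewrite exchange_big /=; apply: (big_nthP (crepQ Hdy)) => q [[_ Hq1] [_ Hq2]].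
  rewrite Ha /lplus Hbr3; apply: eq_bigr => p _.
  rewrite (pickB_spec _ Hq1) (pickB_spec _ Hq2) /lminus; by rewrite brSS.
transitivity (y (\sum_(p <- Delta a) p.1 * S p.2)).
  rewrite (lk_sumE _ _ (UP_lin (U0_UP Hy))); apply: eq_bigr => p _; by rewrite Hdy.2.
rewrite HantR (lkZ (UP_lin (U0_UP Hy))) Ha /lplus br_1r; by [].
Qed.

Lemma prop2b x y dx dy : U0 x -> U0 y -> coprod_rep U0 x dx -> coprod_rep U0 y dy ->
  \sum_(p <- dx) \sum_(q <- dy) inv p.1 q.1 * form p.2 q.2 = x 1 * y 1.
Proof.
move=> [[a Ha] _] Hy Hdx Hdy.
rewrite exchange_big /=.
transitivity (\sum_(q <- dy) x (pickB q.1 * S (pickB q.2))).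
  apply: (big_nthP (crepQ Hdy)) => q [_ [_ Hq2]].
  rewrite Hdx.2; apply: (big_nthP (crepQ Hdx)) => p [_ [Hp2 _]].
  by rewrite (formL _ _ _ Hp2 (pickB_spec _ Hq2)).
transitivity (\sum_(p <- Delta a) \sum_(q <- dy) q.1 (S p.1) * q.2 p.2).
  rewrite exchange_big /=; apply: (big_nthP (crepQ Hdy)) => q [[_ Hq1] [_ Hq2]].
  rewrite Ha /lplus Hbr3; apply: eq_bigr => p _.
  rewrite (pickB_spec _ Hq1) (pickB_spec _ Hq2) /lminus; by rewrite brSS.
transitivity (y (\sum_(p <- Delta a) S p.1 * p.2)).
  rewrite (lk_sumE _ _ (UP_lin (U0_UP Hy))); apply: eq_bigr => p _; by rewrite Hdy.2.
rewrite HantL (lkZ (UP_lin (U0_UP Hy))) Ha /lplus br_1r; by [].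
Qed.

Lemma prop1 x y dx dy c : U0 x -> U0 y -> coprod_rep U0 x dx -> coprod_rep U0 y dy ->
  \sum_(p <- dx) \sum_(q <- dy) form p.1 q.1 * dual_mul Delta q.2 p.2 c
= \sum_(p <- dx) \sum_(q <- dy) form p.2 q.2 * dual_mul Delta p.1 q.1 c.
Proof.
move=> [[a Ha] _] [[a' Ha'] _] Hdx Hdy.
have brc : linear_to_k (fun w => br w c) by exact: Hbr.1.
transitivity (\sum_(q <- dy) \sum_(r <- Delta c) q.2 r.1 * x (S (pickB q.1) * r.2)).
  rewrite exchange_big /=; apply: (big_nthP (crepQ Hdy)) => q [[_ Hq1] _].
  transitivity (\sum_(p <- dx) \sum_(r <- Delta c) q.2 r.1 * (p.1 (S (pickB q.1)) * p.2 r.2)).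
    apply: (big_nthP (crepQ Hdx)) => p [[Hp1 _] _].
    rewrite (formL _ _ _ Hp1 (pickB_spec _ Hq1)) /dual_mul mulr_sumr.
    apply: eq_bigr => r _; ring.
  rewrite exchange_big /=; apply: eq_bigr => r _; by rewrite Hdx.2 mulr_sumr.
transitivity (\sum_(t <- Delta a) \sum_(r <- Delta c) br t.2 r.2 * y (t.1 * r.1)).
  transitivity (\sum_(q <- dy) \sum_(r <- Delta c) \sum_(t <- Delta a)
      q.2 r.1 * q.1 t.1 * br t.2 r.2).
    apply: (big_nthP (crepQ Hdy)) => q [[_ Hq1] _]; apply: eq_bigr => r _.
    rewrite Ha /lplus Hbr3 mulr_sumr; apply: eq_bigr => t _.
    rewrite (pickB_spec _ Hq1) /lminus; ring.
  rewrite push2; apply: eq_bigr => t _; rewrite exchange_big /=; apply: eq_bigr => r _.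
  rewrite Hdy.2 mulr_sumr; apply: eq_bigr => q _; ring.
transitivity (\sum_(t <- Delta a) \sum_(t' <- Delta a') br t'.1 t.1 * br (t.2 * t'.2) c).
  apply: eq_bigr => t _.
  transitivity (\sum_(r <- Delta c) \sum_(t' <- Delta a') br t'.1 t.1 * (br t'.2 r.1 * br t.2 r.2)).
    apply: eq_bigr => r _; rewrite Ha' /lplus Hbr3 mulr_sumr; apply: eq_bigr => t' _; ring.
  rewrite exchange_big /=; apply: eq_bigr => t' _; by rewrite Hbr4 mulr_sumr.
symmetry.
transitivity (\sum_(q <- dy) \sum_(r <- Delta c) q.1 r.2 * x (r.1 * S (pickB q.2))).
  rewrite exchange_big /=; apply: (big_nthP (crepQ Hdy)) => q [_ [_ Hq2]].
  transitivity (\sum_(p <- dx) \sum_(r <- Delta c) q.1 r.2 * (p.1 r.1 * p.2 (S (pickB q.2)))).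
    apply: (big_nthP (crepQ Hdx)) => p [_ [Hp2 _]].
    rewrite (formL _ _ _ Hp2 (pickB_spec _ Hq2)) /dual_mul mulr_sumr.
    apply: eq_bigr => r _; ring.
  rewrite exchange_big /=; apply: eq_bigr => r _; by rewrite Hdx.2 mulr_sumr.
transitivity (\sum_(t <- Delta a) \sum_(r <- Delta c) br t.1 r.1 * y (r.2 * t.2)).
  transitivity (\sum_(q <- dy) \sum_(r <- Delta c) \sum_(t <- Delta a)
      q.1 r.2 * br t.1 r.1 * q.2 t.2).
    apply: (big_nthP (crepQ Hdy)) => q [_ [_ Hq2]]; apply: eq_bigr => r _.
    rewrite Ha /lplus Hbr3 mulr_sumr; apply: eq_bigr => t _.
    rewrite (pickB_spec _ Hq2) /lminus; ring.
  rewrite push2; apply: eq_bigr => t _; rewrite exchange_big /=; apply: eq_bigr => r _.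
  rewrite Hdy.2 mulr_sumr; apply: eq_bigr => q _; ring.
transitivity (\sum_(t <- Delta a) \sum_(t' <- Delta a') br t'.2 t.2 * br (t'.1 * t.1) c).
  apply: eq_bigr => t _.
  transitivity (\sum_(r <- Delta c) \sum_(t' <- Delta a') br t'.2 t.2 * (br t.1 r.1 * br t'.1 r.2)).
    apply: eq_bigr => r _; rewrite Ha' /lplus Hbr3 mulr_sumr; apply: eq_bigr => t' _; ring.
  rewrite exchange_big /=; apply: eq_bigr => t' _; by rewrite Hbr4 mulr_sumr.
have E := congr1 (fun w => br w c) (Hbr1 a' a); rewrite /= in E.
have bs : forall (G : A * A -> A * A -> k) (H : A * A -> A * A -> A),
    br (\sum_(p <- Delta a') \sum_(q <- Delta a) G p q *: H p q) c =
    \sum_(p <- Delta a') \sum_(q <- Delta a) G p q * br (H p q) c.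
  move=> G H; rewrite (lk_sumE _ _ brc); apply: eq_bigr => p _.
  rewrite (lk_sumE _ _ brc); apply: eq_bigr => q _; by rewrite (lkZ brc).
rewrite !bs in E.
rewrite exchange_big [in RHS]exchange_big /=; by rewrite E.
Qed.

Lemma form_bil : bilinear_on U0 form.
Proof.
split.
  move=> c x x' y Hx Hx' Hy; have [b Hb] := U0_UM Hy.
  have Hcx : UP (fun a => c * x a + x' a) := U0_UP (U0c c _ _ Hx Hx').
  by rewrite (formL _ _ _ Hcx Hb) (formL _ _ _ (U0_UP Hx) Hb) (formL _ _ _ (U0_UP Hx') Hb).
by move=> c x y y' Hx Hy Hy'; rewrite /form.
Qed.

Lemma inv_bil : bilinear_on U0 inv.
Proof.
split; first by move=> c x x' y Hx Hx' Hy; rewrite /inv.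
move=> c x y y' Hx Hy Hy'.
have [a Ha] := U0_UP Hx; have [b Hb] := U0_UM Hy; have [b' Hb'] := U0_UM Hy'.
have Hc : (fun z => c * y z + y' z) =1 lminus br S (c *: b + b').
  by move=> z; rewrite Hb Hb' /lminus HS (Hbr.2 z).
by rewrite (invE _ _ _ _ Ha Hc) (invE _ _ _ _ Ha Hb) (invE _ _ _ _ Ha Hb') (Hbr.2 a).
Qed.

Lemma final :
  (forall (x y : A -> k) (a a' b b' : A),
     inU0 br S x -> inU0 br S y ->
     x =1 lplus br a -> x =1 lplus br a' ->
     y =1 lminus br S b -> y =1 lminus br S b' ->
     br a (S b) = br a' (S b')) /\
  (exists form : (A -> k) -> (A -> k) -> k,
     (forall (x y : A -> k) (a b : A), inU0 br S x -> inU0 br S y ->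
        x =1 lplus br a -> y =1 lminus br S b -> form x y = br a (S b)) /\
     is_braiding_on Delta (inU0 br S) form).
Proof.
split.
  move=> x y a a' b b' _ _ Hx Hx' Hy Hy'.
  have h1 := Hy a; have h2 := Hy' a; have h3 := Hx (S b'); have h4 := Hx' (S b').
  rewrite /lminus in h1 h2; rewrite /lplus in h3 h4.
  by rewrite -h1 h2 -h3 h4.
exists form; split.
  by move=> x y a b _ _ Hx Hy; exact: formE.
split; first exact: form_bil.
split; first exact: closure.
split.
  move=> x y dx dy Hx Hy Hdx Hdy c; exact: (prop1 x y dx dy c Hx Hy Hdx Hdy).
split.
  exists inv; split; first exact: inv_bil.
  move=> x y dx dy Hx Hy Hdx Hdy; split; [exact: prop2a | exact: prop2b].
split; first by move=> x y z dx Hx Hy Hz Hdx; exact: prop3.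
by move=> x y z dz Hx Hy Hz Hdz; exact: prop4.
Qed.

End Hopf.

Theorem mainTheorem1 (k : fieldType) (A : algType k)
    (Delta : A -> seq (A * A)) (eps : A -> k) (S : A -> A) (br : A -> A -> k) :
  is_hopf Delta eps S -> is_braiding Delta eps br ->
  (* well-definedness *)
  (forall (x y : A -> k) (a a' b b' : A),
     inU0 br S x -> inU0 br S y ->
     x =1 lplus br a -> x =1 lplus br a' ->
     y =1 lminus br S b -> y =1 lminus br S b' ->
     br a (S b) = br a' (S b')) /\
  (* the form so defined is a braiding on U_0 *)
  (exists form : (A -> k) -> (A -> k) -> k,
     (forall (x y : A -> k) (a b : A), inU0 br S x -> inU0 br S y ->
        x =1 lplus br a -> y =1 lminus br S b -> form x y = br a (S b)) /\
     is_braiding_on Delta (inU0 br S) form).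
Proof.
move=> [HDlin [Hcoas [Heps [Hcl [Hcr [HDmul [HD1 [Hepsmul [Heps1 [HS [HantL HantR]]]]]]]]]]].
move=> [Hbr [Hbr1 [[brinv [Hinv Hinv2]] [Hbr3 Hbr4]]]].
exact: (@final k A Delta eps S br brinv HDlin Hcoas Heps Hcl Hcr HDmul HD1 Hepsmul Heps1 HS
  HantL HantR Hbr Hbr1 Hinv Hinv2 Hbr3 Hbr4).
Qed.
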